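(* If $G$ is a connected chordal graph, then $d_G(s,t)=\lambda_G(s,t)$ for every $s,t\in V(G)$.
   Context: Rendezvous game with adversaries. Let $G$ be a finite, simple, undirected, connected graph, let $s,t\in V(G)$ and let $k\ge 1$ be an integer. Two players play: Facilitator, who controls two agents $R$ and $J$ initially placed on $s$ and $t$ respectively, and Divider, who controls $k$ agents $D_1,\dots,D_k$ which Divider initially places on vertices of $V(G)\setminus\{s,t\}$ of his choice (several agents may share a vertex). After the initial placement the players alternate moves, Facilitator moving first. In a move, the player moves each of his agents to an adjacent vertex or leaves it where it is; no agent may be moved to a vertex currently occupied by an agent of the opponent. Both players have full information. Facilitator wins if at some moment $R$ and $J$ occupy the same vertex; Divider wins if this never happens. $d_G(s,t)$ is the minimum $k$ such that Divider with $k$ agents has a winning strategy on $G$ against Facilitator starting from $s$ and $t$; $d_G(s,t)=+\infty$ if $s=t$ or $s,t$ are adjacent. $\lambda_G(s,t)$ is the minimum size of a set $S\subseteq V(G)\setminus\{s,t\}$ such that $s$ and $t$ lie in different connected components of $G-S$; $\lambda_G(s,t)=+\infty$ if $s=t$ or $s,t$ are adjacent. A graph is chordal if it has no induced cycle on at least 4 vertices. *)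

(* Defs.v *)
(* Graph = symmetric irreflexive relation e on a finType T. *)
From mathcomp Require Import all_boot.
Set Implicit Arguments. Unset Strict Implicit. Unset Printing Implicit Defensive.

Section Rendezvous.
Variables (T : finType) (e : rel T).

Definition simple_graph := symmetric e /\ irreflexive e.
Definition connected_graph := forall x y : T, connect e x y.

Definition induced_cycle (c : seq T) : Prop :=
  [/\ 4 <= size c, uniq c &
      forall (x0 : T) i j, i < size c -> j < size c ->
        e (nth x0 c i) (nth x0 c j) =
        (j == i.+1 %% size c) || (i == j.+1 %% size c)].

Definition chordal := forall c : seq T, ~ induced_cycle c.

(* one step of an agent: stay or move to an adjacent vertex *)
Definition step (x y : T) : bool := (x == y) || e x y.

(* vertex v occupied by some Divider agent at placement d *)
Definition occupied k (d : {ffun 'I_k -> T}) (v : T) : bool := [exists i, d i == v].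

(* Divider's placement after n rounds: d0 initially; after Facilitator's
   (n'+1)-th move, Divider answers via his strategy sigma applied to the
   full history [:: (r 0, j 0); ...; (r n'.+1, j n'.+1)] of Facilitator's positions
   (Divider's own past positions are determined by this history). *)
Definition dpos k (d0 : {ffun 'I_k -> T}) (sigma : seq (T * T) -> {ffun 'I_k -> T})
    (r j : nat -> T) (n : nat) : {ffun 'I_k -> T} :=
  if n is n'.+1 then sigma (mkseq (fun i => (r i, j i)) n'.+2) else d0.

(* Divider has a winning strategy with k agents: an initial placement d0
   avoiding s and t and a (history-dependent) strategy sigma such that, against
   every legal sequence of Facilitator moves, all of Divider's moves are legal
   and R and J never meet. *)
Definition divider_wins (k : nat) (s t : T) : Prop :=
  exists (d0 : {ffun 'I_k -> T}) (sigma : seq (T * T) -> {ffun 'I_k -> T}),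
    (forall i, d0 i != s /\ d0 i != t) /\
    forall r j : nat -> T, r 0 = s -> j 0 = t ->
    forall N,
      (forall m, m < N ->
         [/\ step (r m) (r m.+1), ~~ occupied (dpos d0 sigma r j m) (r m.+1),
             step (j m) (j m.+1) & ~~ occupied (dpos d0 sigma r j m) (j m.+1)]) ->
      r N != j N /\
      (forall m, m < N -> forall i,
         [/\ step (dpos d0 sigma r j m i) (dpos d0 sigma r j m.+1 i),
             dpos d0 sigma r j m.+1 i != r m.+1 &
             dpos d0 sigma r j m.+1 i != j m.+1]).

(* "d_G(s,t) = v" where None stands for +infinity:
   +infinity if s = t or s,t adjacent; otherwise the least k >= 1 such that
   Divider with k agents wins (+infinity if there is none). *)
Definition d_G_is (s t : T) (v : option nat) : Prop :=
  if (s == t) || e s t then v = None else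
  match v with
  | None => forall k, 1 <= k -> ~ divider_wins k s t
  | Some m => [/\ 1 <= m, divider_wins m s t &
                 forall k, 1 <= k -> k < m -> ~ divider_wins k s t]
  end.

Definition separates (S : {set T}) (s t : T) : bool :=
  [&& s \notin S, t \notin S &
      ~~ connect [rel x y | [&& e x y, x \notin S & y \notin S]] s t].

(* lambda_G(s,t), None = +infinity *)
Definition lambda_G (s t : T) : option nat :=
  if (s == t) || e s t then None
  else Some (\big[minn/#|T|]_(S : {set T} | separates S s t) #|S|).

End Rendezvous.

(* Main.v *)
Require Import Defs.
From mathcomp Require Import all_boot zify.

Set Implicit Arguments.
Unset Strict Implicit.

Ltac liaw w := repeat match goal with
 | H : context [@size ?A w] |- _ => progress change (@size A w) with (size w) in H
 | |- context [@size ?A w] => progress change (@size A w) with (size w) end; lia.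


Lemma cycle_ok (T : finType) (e : rel T) (x0 : T) r u v (w : seq T) :
  simple_graph e ->
  e r u -> e r v -> u != v -> ~~ e u v ->
  1 < size w -> nth x0 w 0 = u -> nth x0 w (size w - 1) = v ->
  (forall i, i.+1 < size w -> e (nth x0 w i) (nth x0 w i.+1)) ->
  (forall x, x \in w -> [|| x == u, x == v | (x != r) && ~~ e r x]) ->
  (forall i j, i < size w -> j < size w -> i.+2 <= j -> ~~ e (nth x0 w i) (nth x0 w j)) ->
  induced_cycle e (r :: w).
Proof.
move=> [esy eirr] eru erv nuv neuv w2 w0 wl wp wm nch.
have eirr' : forall x, e x x = false by move=> x; exact: eirr.
have nch' : forall i j, i < size w -> j < size w -> i.+2 <= j -> ~~ e (nth x0 w j) (nth x0 w i).
  by move=> i j hi hj hij; rewrite esy nch.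
have w3 : 2 < size w.
  rewrite ltn_neqAle w2 andbT; apply/eqP => hs.
  have := wp 0; rewrite -hs => /(_ isT); rewrite w0.
  by have := wl; rewrite -hs /= => ->; rewrite (negbTE neuv).
have uw : uniq w.
  apply: contraT => /(uniqPn x0) [i [j [hij hj heq]]].
  case: (ltnP j.+1 (size w)) => hj1.
    by have := nch i j.+1 (ltn_trans hij hj) hj1 hij; rewrite heq wp.
  have hjl : j = (size w - 1) by liaw w.
  case: i hij heq => [|i] hij heq.
    by move: nuv; rewrite -w0 -wl heq -hjl eqxx.
  have := nch i j (ltn_trans (leqnn _) (ltn_trans hij hj)) hj hij.
  by rewrite -heq wp //; liaw w.
have interior : forall j, 0 < j < (size w - 1) -> (nth x0 w j != r) && ~~ e r (nth x0 w j).
  move=> j hj.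
  have jlt : j < size w by liaw w.
  have := wm (nth x0 w j) (mem_nth _ jlt).
  have h0 : (j == 0) = false by apply/negbTE; liaw w.
  have h1 : (j == size w - 1) = false by apply/negbTE; liaw w.
  rewrite -{1}w0 -{1}wl !(nth_uniq _ jlt) ?h0 ?h1 //; liaw w.
have modS : forall a, a < size w -> a.+2 %% (size w).+1 = if a == (size w - 1) then 0 else a.+2.
  move=> a ha; case: ifP => /eqP h; first by rewrite h subn1 prednK ?modnn //; liaw w.
  by rewrite modn_small //; liaw w.
have nr : r \notin w.
  apply/negP => /wm; rewrite eqxx andFb orbF => /orP [] /eqP h.
    by move: eru; rewrite h eirr'.
  by move: erv; rewrite h eirr'.
split; first by rewrite /= ; liaw w.
  by rewrite /= nr uw.
move=> x1 i j; rewrite /= => hi hj.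
have one : 1 %% (size w).+1 = 1 by rewrite modn_small //; liaw w.
have side : forall j', j' < size w -> e r (nth x1 w j') = (j' == 0) || (j' == (size w - 1)).
  move=> j' hj'; rewrite (set_nth_default x0) //.
  case: (eqVneq j' 0) => [->|h0]; first by rewrite w0 eru.
  case: (eqVneq j' (size w - 1)) => [->|h1]; first by rewrite wl erv orbT.
  have := interior j'; rewrite (_ : 0 < j' < (size w - 1)); last by liaw w.
  by move=> /(_ isT) /andP [_ /negbTE ->].
case: i hi => [|i] hi; case: j hj => [|j] hj /=.
- by rewrite eirr' one.
- rewrite one modS; last by liaw w.
  rewrite side; last by liaw w.
  case: ifP => h; rewrite ?orbT ?orbF //.
- rewrite esy one modS; last by liaw w.
  rewrite side; last by liaw w.
  case: ifP => h; rewrite ?orbT ?orbF ?eqSS //; liaw w.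
- rewrite !modS; try liaw w.
  rewrite !(set_nth_default x0); try liaw w.
  have -> : (j.+1 == (if i == (size w - 1) then 0 else i.+2)) || (i.+1 == (if j == (size w - 1) then 0 else j.+2)) = (j == i.+1) || (i == j.+1).
    by case: ifP; case: ifP; move=> /eqP h1 /eqP h2; liaw w.
  case: (ltngtP i j) => h.
  + case: (eqVneq j i.+1) => [->|hne]; first by rewrite wp //; liaw w.
    rewrite (negbTE (nch _ _ _ _ _)) //; liaw w.
  + case: (eqVneq i j.+1) => [->|hne]; first by rewrite esy wp ?orbT //; liaw w.
    rewrite (negbTE (nch' _ _ _ _ _)) //; try liaw w.
  + by rewrite h eirr'; liaw w.
Qed.

Lemma chordal_path (T : finType) (e : rel T) (x0 : T) r u v (w : seq T) :
  simple_graph e -> chordal e ->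
  e r u -> e r v -> u != v -> ~~ e u v ->
  1 < size w -> nth x0 w 0 = u -> nth x0 w (size w - 1) = v ->
  (forall i, i.+1 < size w -> e (nth x0 w i) (nth x0 w i.+1)) ->
  (forall x, x \in w -> [|| x == u, x == v | (x != r) && ~~ e r x]) ->
  False.
Proof.
move=> Hs Hc eru erv nuv neuv.
have [n] := ubnP (size w); elim: n w => // n IH w hn w2 w0 wl wp wm.
case: (boolP [exists i : 'I_(size w), exists j : 'I_(size w),
          (i.+2 <= j) && e (nth x0 w i) (nth x0 w j)]); last first.
  move=> /existsPn hn'.
  apply: (Hc (r :: w)); apply: (@cycle_ok T e x0 r u v w Hs eru erv nuv neuv w2 w0 wl wp wm).
  move=> i j hi hj hij; apply/negP => eij.
  have := hn' (Ordinal hi) => /existsPn /(_ (Ordinal hj)) /=.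
  by rewrite hij eij.
case/existsP => -[i hi] /existsP [[j hj]] /= /andP [hij eij].
set w' := take i.+1 w ++ drop j w.
have sz' : size w' = i.+1 + (size w - j).
  rewrite size_cat size_takel ?size_drop //; liaw w.
have nthw' : forall l, nth x0 w' l = if l <= i then nth x0 w l else nth x0 w (j + (l - i.+1)).
  have hi1 : i.+1 <= size w by liaw w.
  move=> l; rewrite nth_cat size_takel //; case: (ltnP l i.+1) => hl.
    by rewrite nth_take // ifT.
  by rewrite nth_drop ifF //; liaw w.
apply: (IH w').
- rewrite sz'; liaw w.
- rewrite sz'; liaw w.
- by rewrite nthw'.
- rewrite nthw' sz' ifF; last by liaw w.
  rewrite -wl; congr nth; liaw w.
- move=> l; rewrite sz' => hl; rewrite !nthw'.
  case: (ltngtP l i) => hli.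
  + apply: wp; liaw w.
  + have -> : j + (l.+1 - i.+1) = (j + (l - i.+1)).+1 by liaw w.
    apply: wp; liaw w.
  + by rewrite hli subnn addn0.
- by move=> x; rewrite mem_cat => /orP [/mem_take|/mem_drop] /wm.
Qed.

Lemma bigmin_le (I : finType) (P : pred I) (F : I -> nat) m i :
  P i -> \big[minn/m]_(j | P j) F j <= F i.
Proof.
move=> Pi.
have: i \in index_enum I by rewrite mem_index_enum.
elim: (index_enum I) => [|a r IH] //.
rewrite inE big_cons; case/orP=> [/eqP <-|ir].
  by rewrite Pi geq_minl.
case: (P a); last exact: IH.
by rewrite geq_min IH // orbT.
Qed.

Lemma bigmin_attained (I : finType) (P : pred I) (F : I -> nat) m :
  (\big[minn/m]_(j | P j) F j = m) \/
  exists2 i, P i & \big[minn/m]_(j | P j) F j = F i.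
Proof.
elim/big_rec: _ => [|j x Pj [->|[i Pi ->]]]; first by left.
- by case: (leqP (F j) m) => h; [right; exists j|left].
- by case: (leqP (F j) (F i)) => h; right; [exists j|exists i].
Qed.

Definition nclosed (T : finType) (e : rel T) (r y : T) := (y == r) || e r y.
Definition Rr (T : finType) (e : rel T) (r : T) : rel T :=
  [rel a b | [&& e a b, ~~ nclosed e r a & ~~ nclosed e r b]].
Definition Cset (T : finType) (e : rel T) (r t : T) : {set T} :=
  [set y | connect (Rr e r) t y].
Definition Nb (T : finType) (e : rel T) (C : {set T}) : {set T} :=
  [set z | (z \notin C) && [exists y in C, e z y]].

Lemma connect_pred (T : finType) (R : rel T) (P : pred T) x y :
  P x -> (forall a b, P a -> R a b -> P b) -> connect R x y -> P y.
Proof.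
move=> Px HP /connectP [p]; elim: p x Px => [|z p IH] x Px /=; first by move=> _ ->.
case/andP=> Rxz pp; exact: (IH z (HP _ _ Px Rxz) pp).
Qed.

Lemma Cset_out (T : finType) (e : rel T) r t y :
  ~~ nclosed e r t -> y \in Cset e r t -> ~~ nclosed e r y.
Proof.
move=> ht; rewrite inE; apply: (connect_pred (P := fun z => ~~ nclosed e r z)) ht _ => a b _ /= /and3P [].
by [].
Qed.

Lemma Cset_t (T : finType) (e : rel T) r t : t \in Cset e r t.
Proof. by rewrite inE connect0. Qed.

Lemma Cset_ext (T : finType) (e : rel T) r t y z :
  symmetric e -> ~~ nclosed e r t ->
  y \in Cset e r t -> e y z -> ~~ nclosed e r z -> z \in Cset e r t.
Proof.
move=> es ht yC eyz hz; move: (yC); rewrite !inE => cy.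
apply: (connect_trans cy); apply: connect1; rewrite /Rr /= eyz hz andbT.
exact: Cset_out yC.
Qed.

Lemma Nb_adj (T : finType) (e : rel T) r t z :
  symmetric e -> ~~ nclosed e r t ->
  z \in Nb e (Cset e r t) -> e r z.
Proof.
move=> es ht; rewrite inE => /andP [zC /existsP [y /andP [yC ezy]]].
case: (boolP (nclosed e r z)) => hz.
  case/orP: hz => // /eqP zr.
  by have := Cset_out ht yC; rewrite /nclosed -zr ezy orbT.
by move: zC; rewrite (Cset_ext es ht yC _ hz) // es.
Qed.

Lemma Nb_clique (T : finType) (e : rel T) r t u v :
  simple_graph e -> chordal e -> ~~ nclosed e r t ->
  u \in Nb e (Cset e r t) -> v \in Nb e (Cset e r t) -> u != v -> e u v.
Proof.
move=> Hs Hc ht hu hv nuv.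
have es := proj1 Hs.
have eru := Nb_adj es ht hu; have erv := Nb_adj es ht hv.
apply: contraT => neuv; exfalso.
move: hu hv; rewrite !inE => /andP [_ /existsP [a /andP [aC eua]]] /andP [_ /existsP [b /andP [bC evb]]].
have Rsym : symmetric (Rr e r).
  by move=> x y; rewrite /Rr /= es [~~ nclosed e r x && _]andbC.
have cab : connect (Rr e r) a b.
  move: aC bC; rewrite !inE => ca cb.
  apply: connect_trans cb; by rewrite (sym_connect_sym Rsym).
case/connectP: cab => p pp lp.
pose q := rcons (a :: p) v.
pose w := u :: q.
have qp : path e u q.
  rewrite /q rcons_path /= eua -lp es evb andbT /=.
  by apply: sub_path pp => x y /= /and3P [].
apply: (@chordal_path T e u r u v w Hs Hc eru erv nuv neuv).
- by rewrite /w /q /= size_rcons.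
- by [].
- by rewrite subn1 nth_last /w /= /q last_rcons.
- move=> i hi; move/(pathP u): qp => /(_ i); rewrite /w /= in hi *; apply; lia.
- move=> x; rewrite /w /q !inE mem_rcons !inE.
  case/or4P => [/eqP->|/eqP->|/eqP->|xp]; rewrite ?eqxx ?orbT //.
    by have := Cset_out ht aC; rewrite /nclosed negb_or => ->; rewrite !orbT.
  have cx : x \in Cset e r t.
    move: aC; rewrite !inE => ca; apply: connect_trans ca _.
    by apply: (path_connect pp); rewrite inE xp orbT.
  by have := Cset_out ht cx; rewrite /nclosed negb_or => ->; rewrite !orbT.
Qed.

Lemma Cset_sub (T : finType) (e : rel T) r t x :
  simple_graph e -> chordal e -> ~~ nclosed e r t ->
  x \in Nb e (Cset e r t) -> ~~ nclosed e x t -> Cset e x t \subset Cset e r t.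
Proof.
move=> Hs Hc ht hx hxt; apply/subsetP => y; rewrite inE => cy.
apply: (connect_pred (P := fun z => z \in Cset e r t) (Cset_t e r t) _ cy).
move=> a b aC /= /and3P [eab _ hb]; apply: contraT => bC.
have bN : b \in Nb e (Cset e r t).
  by rewrite inE bC /=; apply/existsP; exists a; rewrite aC (proj1 Hs).
case: (eqVneq x b) => [xb|nxb]; first by move: hb; rewrite /nclosed xb eqxx.
by move: hb; rewrite /nclosed (Nb_clique Hs Hc ht hx bN nxb) orbT.
Qed.

Lemma Cset_lt (T : finType) (e : rel T) r t x :
  simple_graph e -> chordal e -> ~~ nclosed e r t ->
  x \in Nb e (Cset e r t) -> ~~ nclosed e x t -> #|Cset e x t| < #|Cset e r t|.
Proof.
move=> Hs Hc ht hx hxt; apply: proper_card; apply/properP; split.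
  exact: Cset_sub.
move: (hx); rewrite inE => /andP [_ /existsP [y /andP [yC exy]]].
exists y => //; apply/negP => yx.
by have := Cset_out hxt yx; rewrite /nclosed exy orbT.
Qed.

Lemma sep_Nb (T : finType) (e : rel T) (C : {set T}) s t :
  t \in C -> s \notin C -> (forall c, c \in C -> ~~ e s c) -> separates e (Nb e C) s t.
Proof.
move=> tC sC hs; apply/and3P; split.
- rewrite inE sC /=; apply/existsP => -[y /andP [yC esy]].
  by move: (hs y yC); rewrite esy.
- by rewrite inE tC.
apply/negP => h.
suff : t \notin C by rewrite tC.
apply: (connect_pred (P := fun a => a \notin C) sC _ h).
move=> a b aC /= /and3P [eab aN bN]; apply/negP => bC.
by move: aN; rewrite inE aC /= => /negP; apply; apply/existsP; exists b; rewrite bC.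
Qed.

Lemma divider_wins_sep (T : finType) (e : rel T) s t (S0 : {set T}) :
  symmetric e -> separates e S0 s t -> divider_wins e #|S0| s t.
Proof.
move=> es /and3P [sS tS nc].
pose d0 : {ffun 'I_#|S0| -> T} := [ffun i : 'I_#|S0| => nth s (enum S0) i].
have d0S : forall i, d0 i \in S0.
  by move=> i; rewrite ffunE -mem_enum mem_nth // -cardE ltn_ord.
have occ : forall v, v \in S0 -> occupied d0 v.
  move=> v vS; apply/existsP.
  have hv : index v (enum S0) < #|S0| by rewrite cardE index_mem mem_enum.
  by exists (Ordinal hv); rewrite ffunE /= nth_index ?mem_enum.
exists d0, (fun _ => d0); split.
  by move=> i; split; apply/eqP => h; [move: sS | move: tS]; rewrite -h d0S.
move=> r j r0 j0 N legal.
have dp : forall m, dpos d0 (fun _ => d0) r j m = d0 by case.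
pose Rel := [rel x y | [&& e x y, x \notin S0 & y \notin S0]].
have Rsym : symmetric Rel by move=> x y; rewrite /= es [(x \notin S0) && _]andbC.
have inv : forall m, m <= N ->
    [&& connect Rel s (r m), r m \notin S0, connect Rel t (j m) & j m \notin S0].
  elim=> [|m IH] hm; first by rewrite r0 j0 !connect0 sS tS.
  case/and4P: (IH (ltnW hm)) => cr rS cj jS.
  case: (legal m hm); rewrite dp => sr or sj oj.
  have rS' : r m.+1 \notin S0 by apply: contra or; exact: occ.
  have jS' : j m.+1 \notin S0 by apply: contra oj; exact: occ.
  rewrite rS' jS' andbT /=; apply/andP; split.
    case/orP: sr => [/eqP <- //|er]; apply: (connect_trans cr); apply: connect1.
    by rewrite /= er rS rS'.
  case/orP: sj => [/eqP <- //|ej]; apply: (connect_trans cj); apply: connect1.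
  by rewrite /= ej jS jS'.
split.
  apply/negP => /eqP h; case/and4P: (inv N (leqnn N)) => cr _ cj _.
  move/negP: nc; apply; apply: (connect_trans cr); rewrite h.
  by rewrite (sym_connect_sym Rsym).
move=> m hm i; rewrite !dp.
case: (legal m hm); rewrite dp => _ or _ oj.
split; first by rewrite /step eqxx.
  by move/existsPn: or => /(_ i); rewrite eq_sym.
by move/existsPn: oj => /(_ i); rewrite eq_sym.
Qed.

Lemma free_vertex (T : finType) k (p : {ffun 'I_k -> T}) (P : {set T}) :
  k < #|P| -> exists2 y, y \in P & ~~ occupied p y.
Proof.
move=> hk.
case: (boolP [exists y in P, ~~ occupied p y]) => [/existsP [y /andP [yP hy]]|/existsPn h].
  by exists y.
have sub : P \subset [set p i | i : 'I_k].
  apply/subsetP => y yP; have := h y; rewrite yP /= negbK => /existsP [i /eqP <-].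
  by apply/imsetP; exists i.
have := leq_trans (subset_leq_card sub) (leq_imset_card _ _).
by rewrite card_ord leqNgt hk.
Qed.

Lemma ar1 a b m : b.+2 + m <= a -> 1 + m.+1 <= a.
Proof. lia. Qed.
Lemma ar2 a b c m : b.+2 + m <= a -> c < b -> c.+2 + m.+1 <= a.
Proof. lia. Qed.
Lemma ar3 x a : x + a <= a -> x = 0.
Proof. lia. Qed.

Lemma facilitator (T : finType) (e : rel T) s t k :
  simple_graph e -> chordal e -> s != t -> ~~ e s t ->
  (forall S, separates e S s t -> k < #|S|) -> ~ divider_wins e k s t.
Proof.
move=> Hs Hc nst nest hsep [d0 [sigma [hd0 H]]].
have es := proj1 Hs.
have eirr : forall x, e x x = false by move=> x; exact: (proj2 Hs).
pose place (h : seq T) : {ffun 'I_k -> T} :=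
  if size h <= 1 then d0 else sigma (map (fun x => (x, t)) h).
pose next (h : seq T) : T :=
  let x := last s h in
  if x == t then x else if e x t then t else
  odflt x [pick y in Nb e (Cset e x t) | ~~ occupied (place h) y].
pose hist := fix hist (n : nat) : seq T :=
  if n is n'.+1 then rcons (hist n') (next (hist n')) else [:: s].
pose r n := last s (hist n).
pose j (n : nat) := t.
have hr : forall n, hist n = mkseq r n.+1.
  elim=> [|n IH] //.
  by rewrite mkseqS -IH /r /= last_rcons.
have rS : forall n, r n.+1 = next (hist n) by move=> n; rewrite /r /= last_rcons.
have hpl : forall n, dpos d0 sigma r j n = place (hist n).
  case=> [|n]; rewrite /place hr size_mkseq //=.
  by rewrite /mkseq -map_comp.
have r0 : r 0 = s by [].
pose mu x := if x == t then 0 else if e x t then 1 else #|Cset e x t|.+2.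
pose Inv x := [|| x == t, e x t | Cset e x t \subset Cset e s t].
pose Legal m := [/\ step e (r m) (r m.+1), ~~ occupied (dpos d0 sigma r j m) (r m.+1),
                    step e (j m) (j m.+1) & ~~ occupied (dpos d0 sigma r j m) (j m.+1)].
have claim : forall m, (forall m', m' < m -> Legal m') /\ Inv (r m) /\
                       (mu (r m) = 0 \/ mu (r m) + m <= mu s).
  elim=> [|m [IHl [IHi IHm]]].
    split => //; split; first by rewrite /Inv r0 subxx !orbT.
    by right; rewrite addn0.
  have pt : forall i, dpos d0 sigma r j m i != t.
    case: m IHl {IHi IHm} => [|m] IHl i; first by case: (hd0 i).
    have [_ H2] := H r j r0 erefl m.+1 IHl.
    by case: (H2 m (leqnn _) i).
  have nocc : ~~ occupied (dpos d0 sigma r j m) t.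
    by apply/existsPn => i; exact: pt.
  have hts : ~~ nclosed e s t by rewrite /nclosed negb_or eq_sym nst nest.
  suff [hL [hI hM]] : Legal m /\ Inv (r m.+1) /\ (mu (r m.+1) = 0 \/ mu (r m.+1) + m.+1 <= mu s).
    split; last by [].
    by move=> m'; rewrite ltnS leq_eqVlt => /orP [/eqP ->|/IHl].
  have rm1 : r m.+1 = if r m == t then r m else if e (r m) t then t else
      odflt (r m) [pick y in Nb e (Cset e (r m) t) | ~~ occupied (dpos d0 sigma r j m) y].
    by rewrite rS hpl.
  have stt : step e t t by rewrite /step eqxx.
  case: (eqVneq (r m) t) => [xt|xnt].
    have hr1 : r m.+1 = t by rewrite rm1 xt eqxx.
    rewrite /Legal /Inv /mu /j hr1 xt eqxx; split.
      by split; [exact: stt | exact: nocc | exact: stt | exact: nocc].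
    by split; [rewrite orTb | left].
  rewrite (negbTE xnt) in rm1.
  case ext: (e (r m) t).
    rewrite ext in rm1.
    rewrite /Legal /Inv /mu /j rm1 eqxx; split.
      by split; [rewrite /step ext orbT | exact: nocc | exact: stt | exact: nocc].
    by split; [rewrite orTb | left].
  rewrite ext in rm1.
  have ht : ~~ nclosed e (r m) t by rewrite /nclosed negb_or eq_sym xnt ext.
  have sub : Cset e (r m) t \subset Cset e s t.
    by move: IHi; rewrite /Inv (negbTE xnt) ext.
  have sep : separates e (Nb e (Cset e (r m) t)) s t.
    apply: sep_Nb; first exact: Cset_t.
      apply/negP => sC; have := Cset_out hts (subsetP sub _ sC).
      by rewrite /nclosed eqxx.
    move=> c cC; have := Cset_out hts (subsetP sub _ cC).
    by rewrite /nclosed negb_or => /andP [_ ->].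
  have [y yP yo] := free_vertex (dpos d0 sigma r j m) (hsep _ sep).
  move: rm1; case: pickP => [z /andP [zP zo] | none] rm1; last first.
    by have := none y; rewrite yP yo.
  rewrite /= in rm1.
  have exz : e (r m) z := Nb_adj es ht zP.
  have znt : z != t.
    apply/eqP => zt; move: zP; rewrite inE zt Cset_t.
    by [].
  have mux : mu (r m) = #|Cset e (r m) t|.+2 by rewrite /mu (negbTE xnt) ext.
  have IHm' : mu (r m) + m <= mu s by case: IHm => //; rewrite mux.
  split; first by rewrite /Legal /j rm1; split; [rewrite /step exz orbT | exact: zo | exact: stt | exact: nocc].
  case ezt: (e z t).
    have muz : mu z = 1 by rewrite /mu (negbTE znt) ezt.
    rewrite rm1 muz; split; first by rewrite /Inv ezt orbT.
    right; move: IHm'; rewrite mux.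
    exact: ar1.
  have hzt : ~~ nclosed e z t by rewrite /nclosed negb_or eq_sym znt ezt.
  have muz : mu z = #|Cset e z t|.+2 by rewrite /mu (negbTE znt) ezt.
  rewrite rm1 muz; split.
    rewrite /Inv (negbTE znt) ezt /=.
    exact: subset_trans (Cset_sub Hs Hc ht zP hzt) sub.
  right; have := Cset_lt Hs Hc ht zP hzt; move: IHm'; rewrite mux.
  exact: ar2.
have [hl [_ hm]] := claim (mu s).
have rt : r (mu s) = t.
  have : mu (r (mu s)) = 0.
    by case: hm => // /ar3.
  rewrite /mu; case: eqP => // _; case: (e _ t) => //.
have [hne _] := H r j r0 erefl (mu s) hl.
by move: hne; rewrite rt /j eqxx.
Qed.

Theorem mainTheorem8 (T : finType) (e : rel T) :
  simple_graph e -> connected_graph e -> chordal e ->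
  forall s t : T, d_G_is e s t (lambda_G e s t).
Proof.
move=> Hs Hcon Hc s t.
rewrite /d_G_is /lambda_G; case: (boolP ((s == t) || e s t)) => // /norP [nst nest].
set L := \big[minn/#|T|]_(S | separates e S s t) #|S|.
have Lmin : forall S, separates e S s t -> L <= #|S|.
  by move=> S hS; exact: (bigmin_le (P := fun S => separates e S s t)).
have S1sep : separates e [set x | (x != s) && (x != t)] s t.
  apply/and3P; split; rewrite ?inE ?eqxx ?andbF //.
  apply/negP => h; suff : t == s by rewrite eq_sym (negbTE nst).
  apply: (connect_pred (P := fun a => a == s) (eqxx s) _ h) => a b /eqP -> /= /and3P [esb _ hb].
  move: hb; rewrite inE negb_and !negbK => /orP [] // /eqP bt.
  by move: nest; rewrite -bt esb.
have [S0 hS0 hL] : exists2 S0, separates e S0 s t & L = #|S0|.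
  case: (bigmin_attained (fun S => separates e S s t) (fun S : {set T} => #|S|) #|T|).
    move=> hL; exists [set x | (x != s) && (x != t)]; first exact: S1sep.
    have hL' : L = #|T| := hL.
    apply/eqP; rewrite eqn_leq (Lmin _ S1sep) /= hL'; exact: max_card.
  by move=> [S0 h1 h2]; exists S0; [exact: h1 | exact: h2].
split.
- rewrite hL card_gt0; apply/negP => /eqP S00.
  move: hS0; rewrite S00 => /and3P [_ _ /negP]; apply.
  rewrite (@eq_connect _ _ e) ?Hcon // => x y /=.
  by rewrite !inE andbT.
- rewrite hL; exact: divider_wins_sep (proj1 Hs) hS0.
- move=> k hk1 hkL; apply: facilitator => // S hS.
  exact: leq_trans hkL (Lmin S hS).
Qed.
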